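(* The semigroup $S=sgp^+\langle a,b\mid aba=ba\rangle$ is not automatic.
   Context: $sgp^+\langle A\mid R\rangle$ is the free semigroup $A^+$ of nonempty words modulo the congruence generated by $R$. Automaticity: regular = accepted by a finite automaton. With $\$\notin A$, $A(2,\$)=(A\cup\{\$\})^2\setminus\{(\$,\$)\}$; $(\alpha,\beta)\delta_A^R$ is the word over $A(2,\$)$ obtained by padding the shorter word on the right with $\$$'s and reading letter pairs. A semigroup $S$ is automatic if there are a finite generating set $A$ (with canonical epimorphism $\phi:A^+\to S$) and a regular $L\subseteq A^+$ with $\phi(L)=S$ such that for every $a\in A\cup\{\varepsilon\}$ the language $\{(\alpha,\beta)\delta^R_A:\alpha,\beta\in L,\ \phi(\alpha a)=\phi(\beta)\}$ is regular. *)

(* Defs.v *)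
From Stdlib Require Import Relation_Operators.
From mathcomp Require Import all_boot.
Set Implicit Arguments. Unset Strict Implicit. Unset Printing Implicit Defensive.

(* Words are seq X; the semigroup consists of nonempty words modulo the
   congruence generated by the relation R (a Prop-valued set of pairs). *)
Inductive pres_step (X : Type) (R : seq X -> seq X -> Prop) : seq X -> seq X -> Prop :=
| pres_step_intro u v l r : R l r -> pres_step R (u ++ l ++ v) (u ++ r ++ v).

Definition pres_cong (X : Type) (R : seq X -> seq X -> Prop) : seq X -> seq X -> Prop :=
  clos_refl_sym_trans (seq X) (pres_step R).

Definition regular (S : finType) (K : seq S -> Prop) : Prop :=
  exists (Q : finType) (q0 : Q) (delta : Q -> S -> Q) (F : pred Q),
    forall w, K w <-> F (foldl delta q0 w).

(* A(2,$) = (A u {$})^2 \ {($,$)}, with $ represented by None. *)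
Definition A2 (A : finType) := {p : option A * option A | p != (None, None)}.

Definition conv_raw (A : finType) (al be : seq A) : seq (option A * option A) :=
  mkseq (fun i => (nth None (map Some al) i, nth None (map Some be) i))
        (maxn (size al) (size be)).

(* (al,be)delta_A^R: no letter of conv_raw is ($,$), so pmap insub keeps all. *)
Definition conv (A : finType) (al be : seq A) : seq (A2 A) :=
  pmap insub (conv_raw al be).

(* S = sgp^+<X | R> is automatic: there are a finite generating set A, i.e. a
   finite type A with a map gen : A -> S (letters sent to nonempty words over
   X, representing elements of S), and a regular L subset A^+ with phi(L) = S
   such that for each a in A u {eps} (option A, None = eps) the language
   {(al,be)delta : al, be in L, phi(al a) = phi(be)} is regular. *)
Definition automatic_pres (X : Type) (R : seq X -> seq X -> Prop) : Prop :=
  exists (A : finType) (gen : A -> seq X),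
    (forall x, gen x <> [::]) /\
    let phi := fun al : seq A => flatten (map gen al) in
    exists L : seq A -> Prop,
      regular L /\
      (forall al, L al -> al <> [::]) /\
      (forall w : seq X, w <> [::] -> exists al, L al /\ pres_cong R (phi al) w) /\
      (forall a : option A,
         regular (fun g : seq (A2 A) =>
           exists al be, L al /\ L be /\ g = conv al be /\
                         pres_cong R (phi (al ++ (if a is Some x then [:: x] else [::]))) (phi be))).

Definition ga : bool := true.
Definition gb : bool := false.
Definition rel_aba_ba (l r : seq bool) : Prop :=
  l = [:: ga; gb; ga] /\ r = [:: gb; ga].

(* Main.v *)
Require Import Defs.
From Stdlib Require Import Relation_Operators.
From mathcomp Require Import all_boot zify.
Set Implicit Arguments. Unset Strict Implicit. Unset Printing Implicit Defensive.

Section Conv.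
Variable A : finType.
Implicit Types al be u s : seq A.

Lemma conv_raw_cons al be : conv_raw al be =
  if maxn (size al) (size be) is 0 then [::]
  else (ohead al, ohead be) :: conv_raw (behead al) (behead be).
Proof.
rewrite /conv_raw.
have H : forall n (F : nat -> option A * option A), mkseq F n.+1 = F 0 :: mkseq (F \o succn) n.
  move=> n F; rewrite /mkseq /= -[in LHS](addn0 1) iotaDl -map_comp. by congr (_ :: _).
case: al be => [|x al] [|y be] //=.
  by rewrite !max0n H; congr (_ :: _); apply: (eq_mkseq _ (size be)) => i /=; rewrite ?nth_nil.
  by rewrite !maxn0 H; congr (_ :: _); apply: eq_mkseq _ (size al) => i /=; rewrite ?nth_nil.
by rewrite maxnSS H; congr (_ :: _); apply: eq_mkseq _ (maxn (size al) (size be)) => i /=; rewrite ?nth_nil.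
Qed.

Lemma conv_raw_cat u s be : size be <= size u ->
  conv_raw (u ++ s) be = conv_raw u be ++ conv_raw s [::].
Proof.
elim: u be => [|x u IH] [|y be] // H.
  by rewrite conv_raw_cons (conv_raw_cons (x :: u)) /= IH.
by rewrite conv_raw_cons (conv_raw_cons (x :: u)) /= !maxnSS IH.
Qed.

Lemma conv_raw_consl x al be :
  conv_raw (x :: al) be = (Some x, ohead be) :: conv_raw al (behead be).
Proof. by rewrite conv_raw_cons; case: be => [|y be] /=; rewrite ?maxn0 ?maxnSS. Qed.

Lemma conv_raw_consr y be :
  conv_raw [::] (y :: be) = (None, Some y) :: conv_raw [::] be.
Proof. by rewrite conv_raw_cons. Qed.

Lemma conv_raw_nil : conv_raw [::] [::] = [::] :> seq (option A * option A).
Proof. by []. Qed.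

Lemma conv_raw_ok al be : all (fun p => p != (None, None)) (conv_raw al be).
Proof.
elim: al be => [|x al IH] be.
  by elim: be => [|y be IHb]; rewrite ?conv_raw_consr //=.
by rewrite conv_raw_consl /= IH.
Qed.

Lemma map_val_pmap (T : Type) (p : pred T) (sT : subType p) (s : seq T) :
  all p s -> map val (pmap (insub : T -> option sT) s) = s.
Proof.
elim: s => [|x s IH] //= /andP [px ps].
by rewrite insubT /= SubK IH.
Qed.

Lemma map_val_conv al be : map val (conv al be) = conv_raw al be.
Proof. by rewrite /conv map_val_pmap // conv_raw_ok. Qed.

Lemma conv_cat u s be : size be <= size u ->
  conv (u ++ s) be = conv u be ++ conv s [::].
Proof. by move=> H; rewrite /conv conv_raw_cat // pmap_cat. Qed.

Lemma conv_raw_fst al be : pmap id (map fst (conv_raw al be)) = al.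
Proof.
elim: al be => [|x al IH] be.
  by elim: be => [|y be IHb]; rewrite ?conv_raw_consr //=.
by rewrite conv_raw_consl /= IH.
Qed.

Lemma conv_raw_snd al be : pmap id (map snd (conv_raw al be)) = be.
Proof.
elim: be al => [|x be IH] al.
  by case: al => [|y al]; rewrite ?conv_raw_consl //=; elim: al {y} => [|y al IHb]; rewrite ?conv_raw_consl //=.
case: al => [|y al]; rewrite ?conv_raw_consr ?conv_raw_consl /= IH //.
Qed.

Lemma conv_inj al be al' be' : conv al be = conv al' be' -> al = al' /\ be = be'.
Proof.
move=> /(congr1 (map val)); rewrite !map_val_conv => E.
split; [rewrite -(conv_raw_fst al be) E conv_raw_fst | rewrite -(conv_raw_snd al be) E conv_raw_snd] => //.
Qed.

Lemma size_conv al be : size (conv al be) = maxn (size al) (size be).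
Proof. by rewrite -(size_map val) map_val_conv size_mkseq. Qed.
End Conv.

Notation cong := (pres_cong rel_aba_ba).

Lemma cong_refl x : cong x x.
Proof. exact: rst_refl. Qed.
Lemma cong_sym x y : cong x y -> cong y x.
Proof. exact: rst_sym. Qed.
Lemma cong_trans x y z : cong x y -> cong y z -> cong x z.
Proof. exact: rst_trans. Qed.

Lemma cong_ctx u v x y : cong x y -> cong (u ++ x ++ v) (u ++ y ++ v).
Proof.
elim=> {x y} [x y [u0 v0 l r Hlr]| x | x y _ IH | x y z _ IH1 _ IH2].
  by apply: rst_step; have := pres_step_intro (u ++ u0) (v0 ++ v) Hlr; rewrite -!catA.
  exact: rst_refl.
  exact: rst_sym.
exact: rst_trans IH2.
Qed.

Lemma cong_rel : cong [:: ga; gb; ga] [:: gb; ga].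
Proof.
have := @pres_step_intro bool rel_aba_ba [::] [::] _ _ (conj erefl erefl).
by rewrite /= => H; apply: rst_step.
Qed.

Lemma cong_inv (T : Type) (f : seq bool -> T) :
  (forall u v, f (u ++ [:: ga; gb; ga] ++ v) = f (u ++ [:: gb; ga] ++ v)) ->
  forall x y, cong x y -> f x = f y.
Proof.
move=> Hf x y; elim=> {x y} [x y [u0 v0 l r [-> ->]]| x | x y _ IH | x y z _ IH1 _ IH2] //.
by rewrite IH1.
Qed.

Lemma rev3 u v : rev (u ++ [:: ga; gb; ga] ++ v) = rev v ++ [:: ga, gb, ga & rev u].
Proof. by rewrite !rev_cat -catA. Qed.
Lemma rev2 u v : rev (u ++ [:: gb; ga] ++ v) = rev v ++ [:: ga, gb & rev u].
Proof. by rewrite !rev_cat -catA. Qed.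

Lemma inv_count x y : cong x y -> count_mem gb x = count_mem gb y.
Proof. by apply: cong_inv => u v; rewrite !count_cat. Qed.

Lemma inv_has x y : cong x y -> has (pred1 ga) x = has (pred1 ga) y.
Proof. by apply: cong_inv => u v; rewrite !has_cat. Qed.

Definition tb (w : seq bool) := find (pred1 ga) (rev w).
Definition bl (w : seq bool) := find (pred1 gb) (drop (tb w) (rev w)).

Lemma inv_tb x y : cong x y -> tb x = tb y.
Proof. by apply: cong_inv => u v; rewrite /tb rev3 rev2 !find_cat. Qed.

Lemma inv_bl x y : cong x y -> bl x = bl y.
Proof.
apply: cong_inv => u v; rewrite /bl /tb rev3 rev2 !find_cat /=.
case: ifP => H.
  rewrite !drop_cat -has_find H !find_cat.
  by case: ifP.
by rewrite !addn0 !drop_cat ltnn subnn.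
Qed.

Lemma nseqS_r (T : Type) k (x : T) : nseq k.+1 x = nseq k x ++ [:: x].
Proof. by elim: k => //= k <-. Qed.

Lemma abka k : cong (ga :: nseq k.+1 gb ++ [:: ga]) (nseq k.+1 gb ++ [:: ga]).
Proof.
elim: k => [|k IH]; first exact: cong_rel.
have E0 : ga :: nseq k.+2 gb ++ [:: ga] = (ga :: nseq k.+1 gb) ++ [:: gb; ga] ++ [::].
  by rewrite cats0 (nseqS_r k.+1) -catA.
have E1 : (ga :: nseq k.+1 gb) ++ [:: ga; gb; ga] ++ [::] =
          [::] ++ (ga :: nseq k.+1 gb ++ [:: ga]) ++ [:: gb; ga].
  by rewrite cats0 /= -catA.
have E2 : [::] ++ (nseq k.+1 gb ++ [:: ga]) ++ [:: gb; ga] = nseq k.+1 gb ++ [:: ga; gb; ga] ++ [::].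
  by rewrite cats0 /= -catA.
have E3 : nseq k.+1 gb ++ [:: gb; ga] ++ [::] = nseq k.+2 gb ++ [:: ga].
  by rewrite cats0 (nseqS_r k.+1) -catA.
rewrite E0 -E3; apply: cong_trans (cong_ctx _ _ (cong_sym cong_rel)) _.
rewrite E1; apply: cong_trans (cong_ctx _ _ IH) _.
by rewrite E2; apply: cong_ctx; exact: cong_rel.
Qed.

Lemma aibka i k : cong (nseq i ga ++ nseq k.+1 gb ++ [:: ga]) (nseq k.+1 gb ++ [:: ga]).
Proof.
elim: i => [|i IH]; first exact: cong_refl.
apply: cong_trans (abka k).
have := cong_ctx [:: ga] [::] IH; by rewrite !cats0.
Qed.

Lemma has_split (w : seq bool) : has (pred1 ga) w -> exists j w', w = nseq j gb ++ ga :: w'.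
Proof.
elim: w => [|x w IH] //=; case: x => /=.
  by move=> _; exists 0, w.
move=> /IH [j [w' ->]]; by exists j.+1, w'.
Qed.

Lemma kill i k w : has (pred1 ga) w -> cong (nseq i ga ++ nseq k.+1 gb ++ w) (nseq k.+1 gb ++ w).
Proof.
move=> /has_split [j [w' ->]].
have E : nseq k.+1 gb ++ nseq j gb ++ ga :: w' = nseq (k + j).+1 gb ++ [:: ga] ++ w'.
  by rewrite -addSn nseqD -!catA.
rewrite E; have := cong_ctx [::] w' (aibka i (k + j)).
by rewrite /= -!catA /= -catA.
Qed.

Lemma shape0 (r : seq bool) : count_mem gb r = 0 -> r = nseq (find (pred1 gb) r) ga.
Proof.
rewrite /ga /gb; elim: r => [|x r IH] //=; case: x => //= H.
by rewrite -IH.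
Qed.

Lemma shape_rev k (r : seq bool) : count_mem gb r = k -> find (pred1 ga) r = k ->
  r = nseq k gb ++ nseq (find (pred1 gb) (drop k r)) ga.
Proof.
elim: k r => [|k IH] r.
  by move=> /shape0 H _; rewrite drop0 /= -H.
case: r => [|x r] //=; case: x => //= [[Hc] [Hf]].
by rewrite [in LHS](IH r Hc Hf).
Qed.

Lemma shape w i k : cong w (nseq i ga ++ nseq k.+1 gb) -> w = nseq i ga ++ nseq k.+1 gb.
Proof.
move=> H.
have Hc := inv_count H; have Ht := inv_tb H; have Hb := inv_bl H.
have Ht' : tb (nseq i ga ++ nseq k.+1 gb) = k.+1.
  rewrite /tb rev_cat !rev_nseq find_cat /= size_nseq.
  suff -> : has (pred1 ga) (nseq k gb) = false by case: i {H Hc Ht Hb} => [|i] /=; rewrite addn0.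
  by elim: k {H Hc Ht Hb} => //.
have Hb' : bl (nseq i ga ++ nseq k.+1 gb) = i.
  rewrite /bl Ht' rev_cat !rev_nseq drop_cat size_nseq ltnn subnn drop0.
  by elim: i {H Hc Ht Hb Ht'} => //= i ->.
have Hc' : count_mem gb (nseq i ga ++ nseq k.+1 gb) = k.+1.
  rewrite count_cat !count_nseq /=; by rewrite mul0n mul1n.
rewrite Hc' in Hc; rewrite Ht' in Ht; rewrite Hb' in Hb.
have Hcr : count_mem gb (rev w) = k.+1 by rewrite count_rev.
have E := @shape_rev k.+1 (rev w) Hcr Ht.
have Ei : find (pred1 gb) (drop k.+1 (rev w)) = i by rewrite -Hb /bl Ht.
by rewrite -[w]revK E Ei rev_cat !rev_nseq.
Qed.

Section Phi.
Variables (A : finType) (gen : A -> seq bool).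
Local Notation phi al := (flatten (map gen al)).

Lemma phi_cat (a b : seq A) : phi (a ++ b) = phi a ++ phi b.
Proof. by rewrite map_cat flatten_cat. Qed.

Lemma has_phi (p : pred bool) (al : seq A) : has p (phi al) -> exists x, has p (gen x).
Proof.
elim: al => [|x al IH] //=; rewrite has_cat => /orP [H|H]; first by exists x.
exact: IH.
Qed.

Lemma size_phi_le M (s : seq A) : (forall x, size (gen x) <= M) -> size (phi s) <= M * size s.
Proof.
move=> HM; elim: s => [|x s IH] //=; rewrite size_cat mulnS.
exact: leq_add.
Qed.

Lemma size_phi_pos (s : seq A) : (forall x, gen x <> [::]) -> s <> [::] -> 0 < size (phi s).
Proof.
move=> Hg; case: s => [|x s] //= _; rewrite size_cat.
by case: (gen x) (Hg x) => [|z g] //.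
Qed.
End Phi.

Lemma suffix_b (x y : seq bool) i k : x ++ y = nseq i ga ++ nseq k gb -> size y <= k ->
  all (pred1 gb) y.
Proof.
move=> E Hy.
have Sx : size x = i + k - size y by rewrite -(size_nseq i ga) -(size_nseq k gb) -!size_cat -E size_cat addnK.
have -> : y = drop (size x) (x ++ y) by rewrite drop_cat ltnn subnn drop0.
rewrite E drop_cat size_nseq.
case: ifP => H.
  exfalso; move: H; rewrite Sx; lia.
rewrite drop_nseq; by elim: (k - (size x - i)) => //= n ->; rewrite andbT.
Qed.

Theorem lemma3p2p4 : ~ automatic_pres rel_aba_ba.
Proof.
move=> [A [gen [genne H]]]; move: H => /= [L [regL [Lne [cover reg]]]].
have [al0 [_ Hal0]] := cover [:: ga] ltac:(by []).
have := inv_has Hal0; rewrite /= => /has_phi [x0 Hx0].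
have [Q [q0 [delta [F HF]]]] := reg (Some x0).
pose M := \max_(x : A) size (gen x).
have HM : forall x, size (gen x) <= M by move=> x; exact: leq_bigmax.
have Mpos : 0 < M.
  apply: leq_trans (HM x0); case: (gen x0) (genne x0) => //.
pose N := #|Q|.
pose k := M * N.
have [be [Lbe Hbe]] := cover (nseq k.+1 gb ++ gen x0) ltac:(by []).
pose c := size be.
pose i := M * (c + N).
have [al [Lal Hal]] := cover (nseq i ga ++ nseq k.+1 gb) ltac:(by move/(congr1 size); rewrite size_cat !size_nseq addnS).
have Hshape := shape Hal.
have Hsz : c + N < size al.
  have := @size_phi_le A gen M al HM; rewrite Hshape size_cat !size_nseq.
  move=> H1; have H2 : M * (c + N) < M * size al by rewrite /i in H1; lia.
  by rewrite ltn_pmul2l in H2.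
have Hcong : pres_cong rel_aba_ba (flatten (map gen (al ++ [:: x0]))) (flatten (map gen be)).
  rewrite phi_cat /= cats0 Hshape -catA.
  apply: (cong_trans (kill i k Hx0)).
  exact: cong_sym.
have Facc : F (foldl delta q0 (conv al be)).
  by apply/HF; exists al, be.
pose u := take (size al - N) al.
pose s := drop (size al - N) al.
have Hs : size s = N by rewrite /s size_drop subKn //; lia.
have Hu : c <= size u by rewrite /u size_take; case: ifP => _; lia.
have Eal : al = u ++ s by rewrite cat_take_drop.
pose f := fun j : 'I_N.+1 => foldl delta q0 (conv u be ++ conv (take j s) [::]).
have [j1 [j2 [Hj12 Hj2 Ef]]] : exists j1 j2 : nat, [/\ j1 < j2, j2 <= N &
    foldl delta q0 (conv u be ++ conv (take j1 s) [::]) =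
    foldl delta q0 (conv u be ++ conv (take j2 s) [::])].
  case: (pickP (fun p : 'I_N.+1 * 'I_N.+1 => (p.1 < p.2) && (f p.1 == f p.2))).
    move=> [a b] /andP [/= lt /eqP e]; exists a, b; split => //.
    by rewrite -ltnS.
  move=> none; exfalso.
  have inj : injective f.
    move=> a b eab; case: (ltngtP a b) => h.
        by have := none (a, b); rewrite /= h eab eqxx.
      by have := none (b, a); rewrite /= h eab eqxx.
    exact: val_inj.
  by have := leq_card _ inj; rewrite card_ord ltnn.
pose s1 := take j1 s.
pose y := take (j2 - j1) (drop j1 s).
pose s2 := drop j2 s.
have Et2 : take j2 s = s1 ++ y by rewrite /s1 /y -takeD subnKC // ltnW.
have Es : s = s1 ++ y ++ s2 by rewrite catA -Et2 cat_take_drop.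
have Hy : y <> [::].
  move=> Hy0; have := congr1 size Hy0; rewrite /y size_take size_drop Hs.
  case: ifP => _ /=; lia.
pose al' := u ++ s1 ++ s2.
have Hacc : F (foldl delta q0 (conv al' be)).
  move: Facc.
  rewrite /al' Eal !conv_cat // ?size_cat; try lia.
  rewrite Es !conv_cat //.
  have E1 : conv (s1 ++ y) [::] = conv s1 [::] ++ conv y [::] by rewrite conv_cat.
  move: Ef; rewrite -/s1 Et2 E1 !catA !foldl_cat => <-.
  by [].
have /HF [al'' [be'' [_ [_ [Ec Hc']]]]] := Hacc.
have [Eal'' Ebe''] := conv_inj Ec.
subst al'' be''.
have C1 := inv_count Hc'.
have C2 := inv_count Hcong.
have C3 : count_mem gb (flatten (map gen (al' ++ [:: x0]))) =
          count_mem gb (flatten (map gen (al ++ [:: x0]))) by rewrite C1 C2.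
rewrite /al' Eal Es !phi_cat !count_cat in C3.
have Hall : all (pred1 gb) (flatten (map gen s)).
  apply: (suffix_b (x := flatten (map gen u)) (i := i) (k := k.+1)).
    by rewrite -phi_cat -Eal.
  apply: leq_trans (size_phi_le _ HM) _; rewrite Hs /k; lia.
rewrite Es !phi_cat !all_cat in Hall.
move/and3P: Hall => [_ Hally _].
have Hpos := size_phi_pos genne Hy.
move: Hally; rewrite all_count => /eqP Hcy.
have Z : count_mem gb (flatten (map gen y)) = 0 by move: C3; lia.
by move: Hpos; rewrite -Hcy Z.
Qed.
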